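(* Let $(V,c)$ be a braided vector space, i.e. $V$ a finite-dimensional complex vector space and $c\in GL(V\otimes V)$ satisfying $(c\otimes \mathrm{Id}_V)(\mathrm{Id}_V\otimes c)(c\otimes \mathrm{Id}_V)=(\mathrm{Id}_V\otimes c)(c\otimes \mathrm{Id}_V)(\mathrm{Id}_V\otimes c)$. Then $(V,c)$ is both of left group-type and of right group-type if and only if $(V,c)$ is diagonalizable.
   Context: $(V,c)$ is of left group-type if there are an ordered basis $[x_1,\ldots,x_n]$ of $V$ and $g_i\in GL(V)$ with $c(x_i\otimes z)=g_i(z)\otimes x_i$ for all $i$ and $z\in V$; it is of right group-type if there are an ordered basis $[x_1,\ldots,x_n]$ of $V$ and $g_j\in GL(V)$ with $c(z\otimes x_j)=x_j\otimes g_j(z)$ for all $j$ and $z\in V$ (the bases for left and right need not coincide). $(V,c)$ is of diagonal type with respect to a basis $[x_1,\ldots,x_n]$ if $c(x_i\otimes x_j)=q_{ij}\,x_j\otimes x_i$ for some scalars $q_{ij}$, and it is diagonalizable if there exists a basis of $V$ with respect to which it is of diagonal type. *)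

(* Defs.v *)
From HB Require Import structures.
From mathcomp Require Import all_boot all_order all_algebra.
From mathcomp Require Import reals complex.
Set Implicit Arguments. Unset Strict Implicit. Unset Printing Implicit Defensive.
Import Order.TTheory GRing.Theory Num.Theory.
Local Open Scope ring_scope.

(* V = 'rV[F]_n (row vectors, standard basis e_0..e_{n-1}).
   V (x) V is represented by 'M[F]_n: the matrix t stands for
   \sum_{i,j} t i j e_i (x) e_j.
   V (x) V (x) V is represented by functions 'I_n -> 'I_n -> 'I_n -> F.
   A linear map c : V(x)V -> V(x)V is given by its coefficients
   c i j k l, meaning c(e_i (x) e_j) = \sum_{k,l} c i j k l e_k (x) e_l. *)

Definition tens2 (F : fieldType) (n : nat) (x z : 'rV[F]_n) : 'M[F]_n :=
  \matrix_(i, j) (x 0 i * z 0 j).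

Definition capp (F : fieldType) (n : nat)
  (c : 'I_n -> 'I_n -> 'I_n -> 'I_n -> F) (t : 'M[F]_n) : 'M[F]_n :=
  \matrix_(k, l) \sum_(i < n) \sum_(j < n) c i j k l * t i j.

(* c (x) Id_V *)
Definition c12 (F : fieldType) (n : nat)
  (c : 'I_n -> 'I_n -> 'I_n -> 'I_n -> F) (T : 'I_n -> 'I_n -> 'I_n -> F) :
  'I_n -> 'I_n -> 'I_n -> F :=
  fun p q r => \sum_(i < n) \sum_(j < n) c i j p q * T i j r.

(* Id_V (x) c *)
Definition c23 (F : fieldType) (n : nat)
  (c : 'I_n -> 'I_n -> 'I_n -> 'I_n -> F) (T : 'I_n -> 'I_n -> 'I_n -> F) :
  'I_n -> 'I_n -> 'I_n -> F :=
  fun p q r => \sum_(j < n) \sum_(k < n) c j k q r * T p j k.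

Definition bvs_braided (F : fieldType) (n : nat)
  (c : 'I_n -> 'I_n -> 'I_n -> 'I_n -> F) : Prop :=
  (exists d : 'I_n -> 'I_n -> 'I_n -> 'I_n -> F,
      forall t : 'M[F]_n, capp d (capp c t) = t /\ capp c (capp d t) = t) /\
  (forall T : 'I_n -> 'I_n -> 'I_n -> F,
      c12 c (c23 c (c12 c T)) = c23 c (c12 c (c23 c T))).

(* An ordered basis [x_1..x_n] of V is the list of rows of an invertible
   matrix B (x_i = row i B); elements of GL(V) are invertible matrices g
   acting on row vectors by z |-> z *m g. *)
Definition bvs_left_group_type (F : fieldType) (n : nat)
  (c : 'I_n -> 'I_n -> 'I_n -> 'I_n -> F) : Prop :=
  exists (B : 'M[F]_n) (g : 'I_n -> 'M[F]_n),
    B \in unitmx /\ (forall i, g i \in unitmx) /\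
    forall (i : 'I_n) (z : 'rV[F]_n),
      capp c (tens2 (row i B) z) = tens2 (z *m g i) (row i B).

Definition bvs_right_group_type (F : fieldType) (n : nat)
  (c : 'I_n -> 'I_n -> 'I_n -> 'I_n -> F) : Prop :=
  exists (B : 'M[F]_n) (g : 'I_n -> 'M[F]_n),
    B \in unitmx /\ (forall j, g j \in unitmx) /\
    forall (j : 'I_n) (z : 'rV[F]_n),
      capp c (tens2 z (row j B)) = tens2 (row j B) (z *m g j).

Definition bvs_diagonal_type (F : fieldType) (n : nat)
  (c : 'I_n -> 'I_n -> 'I_n -> 'I_n -> F) (B : 'M[F]_n) : Prop :=
  exists q : 'I_n -> 'I_n -> F,
    forall i j : 'I_n,
      capp c (tens2 (row i B) (row j B)) = q i j *: tens2 (row j B) (row i B).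

Definition bvs_diagonalizable (F : fieldType) (n : nat)
  (c : 'I_n -> 'I_n -> 'I_n -> 'I_n -> F) : Prop :=
  exists B : 'M[F]_n, B \in unitmx /\ bvs_diagonal_type c B.

(* Main.v *)
Require Import Defs.
From HB Require Import structures.
From mathcomp Require Import all_boot all_order all_algebra.
From mathcomp Require Import reals complex.
From mathcomp Require Import ring.
From Stdlib Require Import FunctionalExtensionality.
Set Implicit Arguments. Unset Strict Implicit. Unset Printing Implicit Defensive.
Import Order.TTheory GRing.Theory Num.Theory.
Local Open Scope ring_scope.

Lemma capp_lin (F : fieldType) (n : nat) (c : 'I_n -> 'I_n -> 'I_n -> 'I_n -> F)
  (a : F) (t s : 'M[F]_n) : capp c (a *: t + s) = a *: capp c t + capp c s.
Proof.
apply/matrixP => k l; rewrite !mxE big_distrr -big_split /=.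
apply: eq_bigr => i _; rewrite big_distrr -big_split /=.
by apply: eq_bigr => j _; rewrite !mxE; ring.
Qed.

Lemma capp0 (F : fieldType) (n : nat) (c : 'I_n -> 'I_n -> 'I_n -> 'I_n -> F) :
  capp c 0 = 0.
Proof.
have := capp_lin c 1 0 0; rewrite !scale1r addr0 => E.
by apply/(@addrI _ (capp c 0)); rewrite addr0 -E.
Qed.

Definition lin (F : fieldType) (n : nat) (f : 'rV[F]_n -> 'M[F]_n) :=
  forall a z w, f (a *: z + w) = a *: f z + f w.

Lemma lin0 (F : fieldType) (n : nat) (f : 'rV[F]_n -> 'M[F]_n) : lin f -> f 0 = 0.
Proof.
move=> H; have := H 1 0 0; rewrite !scale1r addr0 => E.
by apply/(@addrI _ (f 0)); rewrite addr0 -E.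
Qed.

Lemma lin_ext (F : fieldType) (n : nat) (f1 f2 : 'rV[F]_n -> 'M[F]_n) (B : 'M[F]_n) :
  lin f1 -> lin f2 -> B \in unitmx -> (forall j, f1 (row j B) = f2 (row j B)) ->
  forall z, f1 z = f2 z.
Proof.
move=> L1 L2 Bu E z.
have -> : z = (z *m invmx B) *m B by rewrite mulmxKV.
rewrite mulmx_sum_row.
apply: (big_rec2 (fun y1 y2 => f1 y1 = f2 y2)); first by rewrite !lin0.
by move=> i y1 y2 _ IH; rewrite L1 L2 IH E.
Qed.

Lemma tens2Zl (F : fieldType) (n : nat) (k : F) (a b : 'rV[F]_n) :
  tens2 (k *: a) b = k *: tens2 a b.
Proof. by apply/matrixP => i j; rewrite !mxE mulrA. Qed.

Lemma tens2Zr (F : fieldType) (n : nat) (k : F) (a b : 'rV[F]_n) :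
  tens2 a (k *: b) = k *: tens2 a b.
Proof. by apply/matrixP => i j; rewrite !mxE; ring. Qed.

Lemma lin_capp_l (F : fieldType) (n : nat) (c : 'I_n -> 'I_n -> 'I_n -> 'I_n -> F) x :
  lin (fun z => capp c (tens2 x z)).
Proof.
move=> a z w; rewrite -capp_lin; congr capp.
by apply/matrixP => i j; rewrite !mxE; ring.
Qed.

Lemma lin_capp_r (F : fieldType) (n : nat) (c : 'I_n -> 'I_n -> 'I_n -> 'I_n -> F) x :
  lin (fun z => capp c (tens2 z x)).
Proof.
move=> a z w; rewrite -capp_lin; congr capp.
by apply/matrixP => i j; rewrite !mxE; ring.
Qed.

Lemma lin_tens_l (F : fieldType) (n : nat) (g : 'M[F]_n) x :
  lin (fun z => tens2 (z *m g) x).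
Proof.
move=> a z w; rewrite mulmxDl -scalemxAl.
by apply/matrixP => i j; rewrite !mxE; ring.
Qed.

Lemma lin_tens_r (F : fieldType) (n : nat) (g : 'M[F]_n) x :
  lin (fun z => tens2 x (z *m g)).
Proof.
move=> a z w; rewrite mulmxDl -scalemxAl.
by apply/matrixP => i j; rewrite !mxE; ring.
Qed.

Lemma row_unit_neq0 (F : fieldType) (n : nat) (B : 'M[F]_n) i :
  B \in unitmx -> row i B != 0.
Proof.
move=> Bu; apply/eqP => E.
have : (delta_mx 0 i : 'rV_n) *m B *m invmx B = delta_mx 0 i by rewrite mulmxK.
rewrite -rowE E mul0mx => /matrixP /(_ 0 i); rewrite !mxE !eqxx /=.
by move/eqP; rewrite eq_sym oner_eq0.
Qed.

Lemma nz_entry (F : fieldType) (n : nat) (x : 'rV[F]_n) :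
  x != 0 -> exists k, x 0 k != 0.
Proof.
move=> nx; case: (boolP [exists k, x 0 k != 0]) => [/existsP//|/existsPn H].
case/eqP: nx; apply/rowP => k; rewrite mxE.
by move: (H k); rewrite negbK => /eqP.
Qed.

Lemma tens2_eq (F : fieldType) (n : nat) (a b a' b' : 'rV[F]_n) :
  tens2 a b = tens2 a' b' -> b != 0 -> a' != 0 ->
  exists l, a = l *: a' /\ b' = l *: b.
Proof.
move=> E /nz_entry [k bk] /nz_entry [p ap].
have Ec : forall i j, a 0 i * b 0 j = a' 0 i * b' 0 j.
  by move=> i j; move/matrixP: E => /(_ i j); rewrite !mxE.
exists (b' 0 k / b 0 k); split.
  apply/rowP => i; rewrite !mxE.
  apply: (mulIf bk); rewrite Ec; field; exact: bk.
apply/rowP => j; rewrite !mxE.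
apply: (mulfI ap).
have := Ec p j; have := Ec p k.
move=> H1 H2.
have -> : a' 0 p * b' 0 j = a 0 p * b 0 j by rewrite H2.
have ha : a 0 p = a' 0 p * b' 0 k / b 0 k by rewrite -H1; field.
rewrite ha; field; exact: bk.
Qed.

Lemma tens2_neq0 (F : fieldType) (n : nat) (a b : 'rV[F]_n) :
  a != 0 -> b != 0 -> tens2 a b != 0.
Proof.
move=> /nz_entry [k ak] /nz_entry [p bp]; apply/eqP => /matrixP /(_ k p).
by rewrite !mxE => /eqP; rewrite mulf_eq0 (negPf ak) (negPf bp).
Qed.

Definition dmx (F : fieldType) (n : nat) (B : 'M[F]_n) (d : 'rV[F]_n) :=
  invmx B *m diag_mx d *m B.

Lemma row_dmx (F : fieldType) (n : nat) (B : 'M[F]_n) (d : 'rV[F]_n) j :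
  B \in unitmx -> row j B *m dmx B d = d 0 j *: row j B.
Proof.
move=> Bu; rewrite /dmx -row_mul !mulmxA mulmxV // mul1mx.
by rewrite mul_diag_mx; apply/rowP => k; rewrite !mxE.
Qed.

Lemma dmx_unit (F : fieldType) (n : nat) (B : 'M[F]_n) (d : 'rV[F]_n) :
  B \in unitmx -> (forall j, d 0 j != 0) -> dmx B d \in unitmx.
Proof.
move=> Bu nd; rewrite /dmx !unitmx_mul unitmx_inv Bu /= andbT.
rewrite unitmxE det_diag unitfE; apply/prodf_neq0 => j _; exact: nd.
Qed.

Lemma diag_rows (F : fieldType) (n : nat) (B M : 'M[F]_n) (d : 'rV[F]_n) :
  (forall j, row j B *m M = d 0 j *: row j B) -> B *m M = diag_mx d *m B.
Proof.
move=> H; apply/row_matrixP => j; rewrite row_mul H mul_diag_mx.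
by apply/rowP => k; rewrite !mxE.
Qed.

Lemma rows_eq_mul (F : fieldType) (n : nat) (B M N : 'M[F]_n) :
  B \in unitmx -> (forall i, row i B *m M = row i B *m N) -> M = N.
Proof.
move=> Bu H.
have : B *m M = B *m N by apply/row_matrixP => i; rewrite !row_mul H.
by move=> E; rewrite -(mulKmx Bu M) E mulKmx.
Qed.

Definition tens3 (F : fieldType) (n : nat) (a b e : 'rV[F]_n) :
  'I_n -> 'I_n -> 'I_n -> F := fun p q r => a 0 p * b 0 q * e 0 r.

Lemma c12_tens3 (F : fieldType) (n : nat) (c : 'I_n -> 'I_n -> 'I_n -> 'I_n -> F)
  (a b e a' b' : 'rV[F]_n) :
  capp c (tens2 a b) = tens2 a' b' -> c12 c (tens3 a b e) = tens3 a' b' e.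
Proof.
move=> /matrixP E; apply: functional_extensionality => p.
apply: functional_extensionality => q; apply: functional_extensionality => r.
have := E p q; rewrite !mxE /c12 /tens3 => <-.
rewrite big_distrl; apply: eq_bigr => i _; rewrite big_distrl.
by apply: eq_bigr => j _; rewrite mxE /= mulrA.
Qed.

Lemma c23_tens3 (F : fieldType) (n : nat) (c : 'I_n -> 'I_n -> 'I_n -> 'I_n -> F)
  (a b e b' e' : 'rV[F]_n) :
  capp c (tens2 b e) = tens2 b' e' -> c23 c (tens3 a b e) = tens3 a b' e'.
Proof.
move=> /matrixP E; apply: functional_extensionality => p.
apply: functional_extensionality => q; apply: functional_extensionality => r.
have := E q r; rewrite !mxE /c23 /tens3 => E'.
rewrite -mulrA -E' big_distrr; apply: eq_bigr => i _; rewrite big_distrr.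
by apply: eq_bigr => j _; rewrite mxE /=; ring.
Qed.

Lemma tens3_mid (F : fieldType) (n : nat) (a b b' e : 'rV[F]_n) (k : F) :
  k != 0 -> a != 0 -> e != 0 ->
  tens3 a b (k *: e) = tens3 (k *: a) b' e -> b = b'.
Proof.
move=> nk /nz_entry [p ap] /nz_entry [r er] E.
apply/rowP => q.
have := congr1 (fun f => f p q r) E; rewrite /tens3 !mxE => E'.
have nz : k * a 0 p * e 0 r != 0 by rewrite !mulf_neq0.
apply: (mulIf nz).
transitivity (a 0 p * b 0 q * (k * e 0 r)); first by ring.
by rewrite E'; ring.
Qed.

Lemma diagz (F : fieldType) (n : nat) (B M : 'M[F]_n) (d : 'rV[F]_n) :
  B \in unitmx -> (forall j, row j B *m M = d 0 j *: row j B) ->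
  diagonalizable M.
Proof.
move=> Bu H; exists B => //; rewrite /similar_to /= conjumx // (diag_rows H).
by rewrite mulmxK // diag_mx_is_diag.
Qed.

Lemma commz (F : fieldType) (n : nat) (B M N : 'M[F]_n) (d e : 'rV[F]_n) :
  B \in unitmx -> (forall j, row j B *m M = d 0 j *: row j B) ->
  (forall j, row j B *m N = e 0 j *: row j B) -> comm_mx M N.
Proof.
move=> Bu HM HN; apply: (rows_eq_mul Bu) => i.
by rewrite !mulmxA HM HN -!scalemxAl HM HN !scalerA mulrC.
Qed.

Lemma eig_rows (F : fieldType) (n : nat) (P M : 'M[F]_n) :
  P \in unitmx -> is_diag_mx (conjmx P M) ->
  forall k, exists l, row k P *m M = l *: row k P.
Proof.
move=> Pu; rewrite /similar_to conjumx // => /diag_mxP [d E] k; exists (d 0 k).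
have : P *m M = diag_mx d *m P by rewrite -E mulmxKV.
move=> E2; rewrite -row_mul E2 mul_diag_mx; apply/rowP => j; rewrite !mxE //.
Qed.

Lemma diag_to_group (F : fieldType) (n : nat)
  (c : 'I_n -> 'I_n -> 'I_n -> 'I_n -> F) :
  bvs_braided c -> bvs_diagonalizable c ->
  bvs_left_group_type c /\ bvs_right_group_type c.
Proof.
move=> [[d Hd] _] [B [Bu [q Hq]]].
have qnz : forall i j, q i j != 0.
  move=> i j; apply/eqP => q0.
  have := Hq i j; rewrite q0 scale0r => E.
  have := (Hd (tens2 (row i B) (row j B))).1; rewrite E capp0 => E2.
  have := tens2_neq0 (row_unit_neq0 i Bu) (row_unit_neq0 j Bu).
  by rewrite -E2 eqxx.
split.
- exists B, (fun i => dmx B (\row_j q i j)); split => //; split.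
    by move=> i; apply: dmx_unit => // j; rewrite mxE.
  move=> i; apply: (lin_ext (lin_capp_l c _) (lin_tens_l _ _) Bu) => j.
  by rewrite Hq row_dmx // mxE tens2Zl.
- exists B, (fun j => dmx B (\row_i q i j)); split => //; split.
    by move=> j; apply: dmx_unit => // i; rewrite mxE.
  move=> j; apply: (lin_ext (lin_capp_r c _) (lin_tens_r _ _) Bu) => i.
  by rewrite Hq row_dmx // mxE tens2Zr.
Qed.

Lemma group_to_diag (F : fieldType) (n : nat)
  (c : 'I_n -> 'I_n -> 'I_n -> 'I_n -> F) :
  bvs_braided c -> bvs_left_group_type c -> bvs_right_group_type c ->
  bvs_diagonalizable c.
Proof.
move=> [_ Hbr] [X [g [Xu [gu Hg]]]] [Y [h [Yu [hu Hh]]]].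
have Hq0 : forall i j, exists l,
    row j Y *m g i = l *: row j Y /\ row i X *m h j = l *: row i X.
  move=> i j; have E := Hg i (row j Y); rewrite Hh in E.
  exact: (tens2_eq (esym E) (row_unit_neq0 i Xu) (row_unit_neq0 j Yu)).
have [q Hq] : exists q : 'I_n -> 'I_n -> F, forall i j,
    row j Y *m g i = q i j *: row j Y /\ row i X *m h j = q i j *: row i X.
  exact: (fin_all_exists (fun i => fin_all_exists (Hq0 i))).
have qnz : forall i j, q i j != 0.
  move=> i j; apply/eqP => q0; have := (Hq i j).2; rewrite q0 scale0r => E.
  have : row i X *m h j *m invmx (h j) = row i X by rewrite mulmxK.
  by rewrite E mul0mx => /eqP; rewrite eq_sym (negPf (row_unit_neq0 i Xu)).
have Hcomm : forall i j, g i *m h j = h j *m g i.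
  move=> i j; apply: (rows_eq_mul Xu) => k.
  have E := Hbr (tens3 (row i X) (row k X) (row j Y)).
  rewrite (c12_tens3 _ (Hg i _)) (c23_tens3 _ (Hh j _)) (c12_tens3 _ (Hh j _)) in E.
  rewrite (c23_tens3 _ (Hh j _)) (c12_tens3 _ (Hg i _)) (c23_tens3 _ (Hg i _)) in E.
  rewrite (Hq i j).1 (Hq i j).2 in E.
  have := tens3_mid (qnz i j) (row_unit_neq0 j Yu) (row_unit_neq0 i Xu) E.
  by rewrite !mulmxA.
pose As := [seq g i | i <- enum 'I_n] ++ [seq h j | j <- enum 'I_n].
have memAs : forall A, A \in As -> (exists i, A = g i) \/ (exists j, A = h j).
  move=> A; rewrite mem_cat => /orP [/mapP [i _ ->]|/mapP [j _ ->]].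
    by left; exists i.
  by right; exists j.
have gY : forall i j, row j Y *m g i = (\row_m q i m) 0 j *: row j Y.
  by move=> i j; rewrite mxE (Hq i j).1.
have hX : forall j i, row i X *m h j = (\row_m q m j) 0 i *: row i X.
  by move=> j i; rewrite mxE (Hq i j).2.
have [P Pu HP] : codiagonalizable As.
  apply/codiagonalizableP; split.
    move=> A1 A2 /memAs [[i ->]|[j ->]] /memAs [[i' ->]|[j' ->]].
    - exact: commz Yu (gY i) (gY i').
    - exact: Hcomm.
    - exact: esym (Hcomm _ _).
    - exact: commz Xu (hX j) (hX j').
  move=> A /memAs [[i ->]|[j ->]].
    exact: diagz Yu (gY i).
  exact: diagz Xu (hX j).
have eigP : forall A, A \in As -> forall k, exists l, row k P *m A = l *: row k P.
  move=> A AAs; apply: eig_rows => //.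
  by have := allP HP A AAs.
have gAs : forall i, g i \in As.
  by move=> i; rewrite mem_cat; apply/orP; left; apply/mapP; exists i; rewrite ?mem_enum.
have hAs : forall j, h j \in As.
  by move=> j; rewrite mem_cat; apply/orP; right; apply/mapP; exists j; rewrite ?mem_enum.
suff key : forall k l, exists r,
    capp c (tens2 (row k P) (row l P)) = r *: tens2 (row l P) (row k P).
  by exists P; split => //; exact: (fin_all_exists (fun k => fin_all_exists (key k))).
move=> k l.
set pk := row k P; set pl := row l P.
have [al Hal] : exists al : 'I_n -> F, forall j, pk *m h j = al j *: pk.
  exact: (fin_all_exists (fun j => eigP _ (hAs j) k)).
have [be Hbe] : exists be : 'I_n -> F, forall i, pl *m g i = be i *: pl.
  exact: (fin_all_exists (fun i => eigP _ (gAs i) l)).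
pose a := pk *m invmx X; pose b := pl *m invmx Y.
have pka : pk = a *m X by rewrite /a mulmxKV.
have plb : pl = b *m Y by rewrite /b mulmxKV.
have Ha : forall i j, a 0 i * q i j = al j * a 0 i.
  move=> i j.
  have E : a *m diag_mx (\row_m q m j) *m X = (al j *: a) *m X.
    by rewrite -mulmxA -(diag_rows (hX j)) mulmxA -pka Hal -scalemxAl -pka.
  have := congr1 (fun M => (M *m invmx X) 0 i) E; rewrite !mulmxK //.
  by rewrite mul_mx_diag !mxE.
have Hb : forall i m, b 0 m * q i m = be i * b 0 m.
  move=> i m.
  have E : b *m diag_mx (\row_m q i m) *m Y = (be i *: b) *m Y.
    by rewrite -mulmxA -(diag_rows (gY i)) mulmxA -plb Hbe -scalemxAl -plb.
  have := congr1 (fun M => (M *m invmx Y) 0 m) E; rewrite !mulmxK //.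
  by rewrite mul_mx_diag !mxE.
clearbody a b.
have bnz : b != 0.
  apply/eqP => b0; have := row_unit_neq0 l Pu.
  by rewrite -/pl plb b0 mul0mx eqxx.
have [m0 bm0] := nz_entry bnz.
exists (al m0).
pose K := dmx X (\row_i be i).
have E1 : capp c (tens2 pk pl) = tens2 pl (pk *m K).
  apply: (lin_ext (lin_capp_r c pl) (lin_tens_r K pl) Xu) => i.
  by rewrite Hg Hbe row_dmx // mxE tens2Zl tens2Zr.
have E2 : pk *m K = al m0 *: pk.
  rewrite /K /dmx pka !mulmxA mulmxK // scalemxAl; congr (_ *m _).
  apply/rowP => i; rewrite mul_mx_diag !mxE.
  have [->|ai] := eqVneq (a 0 i) 0; first by rewrite mul0r mulr0.
  have e1 : be i = q i m0.
    by apply: (mulIf bm0); rewrite -Hb mulrC.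
  have e2 : q i m0 = al m0.
    by apply: (mulfI ai); rewrite Ha mulrC.
  by rewrite e1 e2 mulrC.
by rewrite E1 E2 tens2Zr.
Qed.

(* The complex numbers are R[i] for R : realType (any realType is the reals). *)
Theorem lemma3p2 (R : realType) (n : nat)
  (c : 'I_n -> 'I_n -> 'I_n -> 'I_n -> R[i]) :
  bvs_braided c ->
  (bvs_left_group_type c /\ bvs_right_group_type c <-> bvs_diagonalizable c).
Proof.
move=> Hc; split.
  by move=> [HL HR]; exact: group_to_diag Hc HL HR.
exact: diag_to_group Hc.
Qed.
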